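(* Let $M$ be a strong module of a CPT poset $\mathbf{P}=(X,P)$, and let $\{W_x\}_{x\in X}$ be a CPT representation of $\mathbf{P}$ on a host tree $T$ in which some element $z\in M$ is represented by a trivial path $W_z=\{a\}$, $a$ a vertex of $T$. If $x\in X\setminus M$ and $W_x$ contains the vertex $a$, then $W_x$ contains $W_m$ for every $m\in M$.
   Context: A CPT representation of a poset $\mathbf{P}=(X,P)$ assigns to each $x\in X$ a path $W_x$ (vertex set) of a host tree $T$ so that $x<y$ iff $W_x\subsetneq W_y$. A set $M\subseteq X$ is a module if every $y\notin M$ is comparable to all elements of $M$ or incomparable to all of them; it is strong if for every module $M'$, $M\cap M'=\emptyset$ or $M\subseteq M'$ or $M'\subseteq M$. A trivial path consists of a single vertex. *)

(* Defs.v *)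
From mathcomp Require Import all_boot.
Set Implicit Arguments. Unset Strict Implicit. Unset Printing Implicit Defensive.

Definition is_tree (V : finType) (e : rel V) : Prop :=
  [/\ symmetric e, irreflexive e,
      (forall u v : V, connect e u v) &
      (forall s : seq V, uniq s -> 3 <= size s -> ~~ cycle e s)].

Definition is_tree_path (V : finType) (e : rel V) (W : {set V}) : Prop :=
  exists (x : V) (p : seq V), [/\ uniq (x :: p), path e x p & W = [set y in x :: p]].

Definition strict_poset (X : finType) (lt : rel X) : Prop :=
  irreflexive lt /\ transitive lt.

Definition comparable (X : finType) (lt : rel X) (x y : X) : bool :=
  lt x y || lt y x.

Definition is_module (X : finType) (lt : rel X) (M : {set X}) : Prop :=
  forall y, y \notin M ->
    (forall m, m \in M -> comparable lt y m) \/
    (forall m, m \in M -> ~~ comparable lt y m).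

Definition is_strong_module (X : finType) (lt : rel X) (M : {set X}) : Prop :=
  is_module lt M /\
  forall M' : {set X}, is_module lt M' ->
    [disjoint M & M'] \/ M \subset M' \/ M' \subset M.

Definition is_CPT_rep (X V : finType) (lt : rel X) (e : rel V)
  (W : X -> {set V}) : Prop :=
  is_tree e /\
  (forall x, is_tree_path e (W x)) /\
  (forall x y, lt x y = (W x \proper W y)).

(* Main.v *)
Require Import Defs.
From mathcomp Require Import all_boot.

Theorem mainTheorem4 (X V : finType) (lt : rel X) (e : rel V)
  (W : X -> {set V}) (M : {set X}) (z : X) (a : V) (x : X) :
  strict_poset lt ->
  is_strong_module lt M ->
  is_CPT_rep lt e W ->
  z \in M -> W z = [set a] ->
  x \notin M -> a \in W x ->
  forall m, m \in M -> W m \subset W x.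
Proof.
move=> [Hirr Htr] [HmodM Hstr] [_ [Hpath Hlt]] zM Wz xM axW m mM.
have Hne : forall v, exists y, y \in W v.
  move=> v; have [y [p [_ _ ->]]] := Hpath v; exists y.
  by rewrite inE in_cons eqxx.
have Hmin : forall v, ~~ lt v z.
  move=> v; rewrite Hlt Wz properE negb_and negbK sub1set; have [y Hy] := Hne v.
  case/boolP: (W v \subset [set a]) => S //=.
  by move/subsetP: S => /(_ y Hy); rewrite inE => /eqP <-.
have [Wxa | Wxa] := eqVneq (W x) [set a].
  have Hmod : is_module lt [set x; z].
    move=> y _.
    have Eq : Defs.comparable lt y x = Defs.comparable lt y z.
      by rewrite /Defs.comparable !Hlt Wxa Wz.
    case/boolP: (Defs.comparable lt y z) => Hc.
      by left => m'; rewrite !inE => /orP [] /eqP ->; rewrite ?Eq.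
    by right => m'; rewrite !inE => /orP [] /eqP ->; rewrite ?Eq.
  have [D|[S|S]] := Hstr _ Hmod.
  - by move: D => /disjointFr /(_ zM); rewrite !inE eqxx orbT.
  - move: S => /subsetP /(_ m mM); rewrite !inE => /orP [/eqP Em|/eqP ->].
      by rewrite Em in mM; rewrite mM in xM.
    by rewrite Wz Wxa.
  - by move: S => /subsetP /(_ x); rewrite !inE eqxx (negbTE xM) => /(_ isT).
have zx : lt z x.
  rewrite Hlt Wz properE sub1set axW /=; apply/negP => S.
  by move/eqP: Wxa; apply; apply/eqP; rewrite eqEsubset S sub1set axW.
have xcomp : forall u, u \in M -> Defs.comparable lt x u.
  move=> u uM; have [H|H] := HmodM x xM.
    exact: H.
  by move: (H z zM); rewrite /Defs.comparable zx orbT.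
have := xcomp m mM; rewrite /Defs.comparable => /orP [xm|mx]; last by move: mx; rewrite Hlt => /proper_sub.
exfalso.
pose N := [set v | [forall u in M, lt x u ==> lt v u] && ((v \in M) ==> lt v x)].
have xN : x \in N by rewrite inE (negbTE xM) andbT; apply/forall_inP => u _; apply/implyP.
have zN : z \in N.
  rewrite inE zM zx andbT; apply/forall_inP => u _; apply/implyP => xu.
  exact: Htr zx xu.
have mN : m \notin N.
  rewrite inE negb_and; apply/orP; left; rewrite negb_forall_in; apply/existsP.
  by exists m; rewrite mM xm Hirr.
have Hmod : is_module lt N.
  move=> y yN.
  case/boolP: (y \in M) => yM.
    case/boolP: (lt y x) => yx.
      exfalso; move: yN; rewrite inE yM yx andbT => /forall_inP; apply => u uM.
      by apply/implyP => xu; exact: Htr yx xu.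
    have xy : lt x y by move: (xcomp y yM); rewrite /Defs.comparable (negbTE yx) orbF.
    left => n; rewrite inE => /andP [/forall_inP /(_ y yM) /implyP /(_ xy) ny _].
    by rewrite /Defs.comparable ny orbT.
  have [u0 [u0M xu0 yu0]] : exists u0, [/\ u0 \in M, lt x u0 & ~~ lt y u0].
    move: yN; rewrite inE (negbTE yM) andbT negb_forall_in => /existsP [u0].
    by rewrite negb_imply => /andP [u0M /andP [xu0 yu0]]; exists u0.
  have [H|H] := HmodM y yM.
    have u0y : lt u0 y by move: (H u0 u0M); rewrite /Defs.comparable (negbTE yu0).
    left => n; rewrite inE => /andP [/forall_inP /(_ u0 u0M) /implyP /(_ xu0) nu0 _].
    by rewrite /Defs.comparable (Htr _ _ _ nu0 u0y) orbT.
  right => n; rewrite inE => /andP [/forall_inP /(_ u0 u0M) /implyP /(_ xu0) nu0 nMx].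
  rewrite /Defs.comparable negb_or; apply/andP; split.
    apply/negP => yn; move: (H u0 u0M); rewrite /Defs.comparable.
    by rewrite (Htr _ _ _ yn nu0).
  apply/negP => ny.
  case/boolP: (n \in M) => nM.
    by move: (H n nM); rewrite /Defs.comparable ny orbT.
  have nz : Defs.comparable lt n z.
    have [H2|H2] := HmodM n nM; first exact: H2.
    by move: (H2 u0 u0M); rewrite /Defs.comparable nu0.
  move: nz; rewrite /Defs.comparable (negbTE (Hmin n)) /= => zn.
  by move: (H z zM); rewrite /Defs.comparable (Htr _ _ _ zn ny) orbT.
have [D|[S|S]] := Hstr _ Hmod.
- by move: D => /disjointFr /(_ zM); rewrite zN.
- by move: S => /subsetP /(_ m mM); rewrite (negbTE mN).
- by move: S => /subsetP /(_ x xN); rewrite (negbTE xM).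
Qed.
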